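(* Let $S$ and $T$ be maps (each with finitely many points of period dividing $n$ for every $n\ge1$) such that the Cartesian product $S\times T$ satisfies $\mathcal O_{S\times T}(n)=1$ for all $n\ge1$. Then there is a set $P$ of primes such that $\mathcal O_T=s_P$ and $\mathcal O_S=s_{P^c}$, where $P^c$ is the set of primes not in $P$.
   Context: For a map $T:X\to X$, $\mathcal O_T(n)$ denotes the number of closed orbits of length $n$ under $T$ (sets $\{x,Tx,\dots,T^{n-1}x\}$ with $T^nx=x$ of cardinality exactly $n$). For a set $P$ of primes, $s_P$ is the sequence with $s_P(n)=0$ if $p\mid n$ for some $p\in P$, and $s_P(n)=1$ otherwise. *)

(* Defs.v *)
From HB Require Import structures.
From mathcomp Require Import all_boot.
From mathcomp Require Import finmap.
From mathcomp Require Import boolp classical_sets cardinality.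
Set Implicit Arguments. Unset Strict Implicit. Unset Printing Implicit Defensive.
Local Open Scope classical_set_scope.
Local Open Scope fset_scope.
Local Open Scope card_scope.

Definition closed_orbits (X : Type) (T : X -> X) (n : nat) : set (set X) :=
  [set A | exists x : X, iter n T x = x /\
            A = [set iter k T x | k in [set k : nat | (k < n)%N]] /\
            A #= [set k : nat | (k < n)%N]].

(* O_T(n): the number of closed orbits of length n (the cardinality of the
   finite set closed_orbits T n; fset_set gives 0 on infinite sets, which
   never arises under the finiteness hypotheses of the theorem). *)
Definition O (X : Type) (T : X -> X) (n : nat) : nat :=
  #|` fset_set (closed_orbits T n) |.

Definition per_points (X : Type) (T : X -> X) (n : nat) : set X :=
  [set x | iter n T x = x].

Definition prod_map (X Y : Type) (S : X -> X) (T : Y -> Y) : X * Y -> X * Y :=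
  fun z => (S z.1, T z.2).

Definition s_ (P : set nat) (n : nat) : nat :=
  if `[< exists p, P p /\ (p %| n)%N >] then 0 else 1.

Definition primes_compl (P : set nat) : set nat :=
  [set p | prime p /\ ~ P p].

(* Main.v *)
Require Import Defs.
From HB Require Import structures.
From mathcomp Require Import all_boot.
From mathcomp Require Import finmap.
From mathcomp Require Import boolp classical_sets cardinality.
From mathcomp Require Import zify.
Local Open Scope classical_set_scope.
Set Implicit Arguments. Unset Strict Implicit.

Definition lp (X : Type) (f : X -> X) (x : X) (n : nat) :=
  (0 < n)%N /\ forall k, iter k f x = x <-> (n %| k)%N.

Definition orb (X : Type) (f : X -> X) (x : X) (n : nat) : set X :=
  [set iter k f x | k in `I_n].

Lemma iter_mul (X : Type) (f : X -> X) x n q :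
  iter n f x = x -> iter (q * n) f x = x.
Proof.
move=> H; elim: q => [|q IH] //; by rewrite mulSn iterD IH H.
Qed.

Lemma iter_mod (X : Type) (f : X -> X) x n k :
  iter n f x = x -> iter k f x = iter (k %% n) f x.
Proof.
by move=> H; rewrite {1}(divn_eq k n) addnC iterD iter_mul.
Qed.

Lemma iter_comm (X : Type) (f : X -> X) x i j :
  iter i f (iter j f x) = iter j f (iter i f x).
Proof. by rewrite -!iterD addnC. Qed.

Lemma lp_of_min (X : Type) (f : X -> X) x n :
  (0 < n)%N -> iter n f x = x ->
  (forall k, (0 < k)%N -> (k < n)%N -> iter k f x <> x) -> lp f x n.
Proof.
move=> n0 Hn Hmin; split=> // k; split.
- move=> Hk; rewrite /dvdn; apply/eqP.
  case E: (k %% n) => [|r] //.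
  exfalso; apply: (Hmin r.+1) => //; first by rewrite -E ltn_pmod.
  by rewrite -E -iter_mod.
- by move/dvdnP=> [q ->]; apply: iter_mul.
Qed.

Lemma lp_exists (X : Type) (f : X -> X) x m :
  (0 < m)%N -> iter m f x = x -> exists n, lp f x n.
Proof.
move=> m0 Hm.
have exP : exists k, `[< (0 < k)%N /\ iter k f x = x >].
  by exists m; apply/asboolP.
case: (ex_minnP exP) => n /asboolP [n0 Hn] Hmin.
exists n; apply: lp_of_min => // k k0 kn Hk.
have : (n <= k)%N by apply: Hmin; apply/asboolP.
by rewrite leqNgt kn.
Qed.

Lemma lp_uniq (X : Type) (f : X -> X) x n m : lp f x n -> lp f x m -> n = m.
Proof.
move=> [n0 Hn] [m0 Hm]; apply/eqP; rewrite eqn_dvd.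
apply/andP; split; [apply/Hn; apply/Hm | apply/Hm; apply/Hn]; exact: dvdnn.
Qed.

Lemma lp_back (X : Type) (f : X -> X) x n j :
  lp f x n -> iter (n - j %% n) f (iter j f x) = x.
Proof.
move=> [n0 Hn]; rewrite -iterD; apply/Hn.
have r_lt := ltn_pmod j n0.
rewrite {2}(divn_eq j n).
have -> : n - j %% n + (j %/ n * n + j %% n) = (j %/ n).+1 * n.
  by rewrite mulSn; lia.
by rewrite dvdn_mull.
Qed.

Lemma lp_iter_mod (X : Type) (f : X -> X) x n i j :
  lp f x n -> iter i f x = iter j f x -> i = j %[mod n].
Proof.
move=> H Hij.
have Hb := lp_back j H.
have Hi : iter (n - j %% n) f (iter i f x) = x by rewrite Hij.
case: H => [n0 Hn].
rewrite -iterD in Hb; rewrite -iterD in Hi.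
move/Hn: Hb; move/Hn: Hi.
rewrite /dvdn => /eqP Hi /eqP Hj.
apply/eqP; rewrite -(eqn_modDl (n - j %% n)).
by rewrite Hi Hj.
Qed.

Lemma lp_iter (X : Type) (f : X -> X) x n j : lp f x n -> lp f (iter j f x) n.
Proof.
move=> H; have Hb := lp_back j H; case: H => [n0 Hn]; split=> // k; split.
- move=> Hk; apply/Hn.
  by rewrite -Hb iter_comm Hk.
- by move/Hn=> Hk; rewrite iter_comm Hk.
Qed.

Lemma orb_iter (X : Type) (f : X -> X) x n j :
  lp f x n -> orb f (iter j f x) n = orb f x n.
Proof.
move=> H; have Hb := lp_back j H; have [n0 Hn] := H.
have Hnx : iter n f x = x by apply/Hn.
apply/predeqP => z; split.
- move=> [i _ <-]; rewrite -iterD.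
  exists ((i + j) %% n); first by rewrite /= ltn_pmod.
  by rewrite -iter_mod.
- move=> [i _ <-].
  have Hnx' : iter n f (iter j f x) = iter j f x by rewrite iter_comm Hnx.
  exists ((i + (n - j %% n)) %% n); first by rewrite /= ltn_pmod.
  by rewrite -iter_mod // iterD Hb.
Qed.

Lemma co_lp (X : Type) (f : X -> X) n A :
  (0 < n)%N -> closed_orbits f n A -> exists x, lp f x n /\ A = orb f x n.
Proof.
move=> n0 [x [Hn [HA Hc]]]; exists x; split; last by [].
apply: lp_of_min => // k k0 kn Hk.
have E : A = orb f x k.
  rewrite HA; apply/predeqP => z; split.
  - move=> [i _ <-]; exists (i %% k); first by rewrite /= ltn_pmod.
    by rewrite -iter_mod.
  - move=> [i /= ik <-]; exists i => //=; exact: ltn_trans kn.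
have h1 : (`I_n #<= A)%card by move: Hc; rewrite card_eq_le => /andP[].
have h2 : (A #<= `I_k)%card by rewrite E; apply: card_image_le.
have := card_le_trans h1 h2; rewrite card_le_II => kn'.
by move: kn; rewrite ltnNge kn'.
Qed.

Lemma lp_co (X : Type) (f : X -> X) x n :
  lp f x n -> closed_orbits f n (orb f x n).
Proof.
move=> H; have [n0 Hn] := H.
exists x; split; first by apply/Hn.
split=> //.
rewrite /orb; apply: inj_card_eq => i j /set_mem /= Hi /set_mem /= Hj Hij.
have := lp_iter_mod H Hij.
by rewrite !modn_small.
Qed.

Lemma O_one (X : Type) (f : X -> X) n :
  O f n = 1%N -> exists A, closed_orbits f n = [set A].
Proof.
rewrite /O; case: (pselect (finite_set (closed_orbits f n))) => fin.
- move=> /eqP /cardfs1P [A HA]; exists A.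
  by rewrite -(fset_setK fin) HA set_fset1.
- by rewrite /fset_set; case: pselect => // _; rewrite cardfs0.
Qed.

Lemma O_0 (X : Type) (f : X -> X) n : closed_orbits f n = set0 -> O f n = 0%N.
Proof. by rewrite /O => ->; rewrite fset_set0 cardfs0. Qed.

Lemma O_1 (X : Type) (f : X -> X) n A : closed_orbits f n = [set A] -> O f n = 1%N.
Proof. by rewrite /O => ->; rewrite fset_set1 cardfs1. Qed.

Lemma iter_prod (X Y : Type) (S : X -> X) (T : Y -> Y) k x y :
  iter k (prod_map S T) (x, y) = (iter k S x, iter k T y).
Proof. by elim: k => [|k IH] //=; rewrite IH. Qed.

Definition lp2 (X Y : Type) (S : X -> X) (T : Y -> Y) x y n :=
  (0 < n)%N /\ forall k, (iter k S x = x /\ iter k T y = y) <-> (n %| k)%N.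

Lemma lp_prod (X Y : Type) (S : X -> X) (T : Y -> Y) x y n :
  lp (prod_map S T) (x, y) n <-> lp2 S T x y n.
Proof.
rewrite /lp /lp2; split => -[n0 H]; split=> // k; rewrite -H iter_prod.
- by split; [move=> [-> ->] | case=> -> ->].
- by split; [case=> -> -> | move=> [-> ->]].
Qed.

Lemma lp2_lcm (X Y : Type) (S : X -> X) (T : Y -> Y) x y a b :
  lp S x a -> lp T y b -> lp2 S T x y (lcmn a b).
Proof.
move=> [a0 Ha] [b0 Hb]; split; first by rewrite lcmn_gt0 a0 b0.
move=> k; rewrite dvdn_lcm Ha Hb; split; first by case=> -> ->.
by move/andP.
Qed.

Lemma lp2_uniq (X Y : Type) (S : X -> X) (T : Y -> Y) x y n m :
  lp2 S T x y n -> lp2 S T x y m -> n = m.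
Proof.
move=> [n0 Hn] [m0 Hm]; apply/eqP; rewrite eqn_dvd.
apply/andP; split; [apply/Hn; apply/Hm | apply/Hm; apply/Hn]; exact: dvdnn.
Qed.

Lemma lp2_comp (X Y : Type) (S : X -> X) (T : Y -> Y) x y n :
  lp2 S T x y n -> exists a b, lp S x a /\ lp T y b /\ n = lcmn a b.
Proof.
move=> H; have [n0 Hn] := H.
have [Hx Hy] := (proj2 (Hn n) (dvdnn n)).
have [a Ha] := lp_exists n0 Hx; have [b Hb] := lp_exists n0 Hy.
exists a, b; split=> //; split=> //.
exact: lp2_uniq H (lp2_lcm Ha Hb).
Qed.

Section Main.
Variables (X Y : Type) (S : X -> X) (T : Y -> Y).
Hypothesis G1 : forall n, (0 < n)%N -> exists x y, lp2 S T x y n.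
Hypothesis G2 : forall n x y x' y', lp2 S T x y n -> lp2 S T x' y' n ->
  exists k, x' = iter k S x /\ y' = iter k T y.

Definition LS a := exists x, lp S x a.
Definition LT b := exists y, lp T y b.

Lemma U1 x y a b : lp S x a -> lp T y b -> coprime a b.
Proof.
move=> Ha Hb.
have H1 := lp2_lcm Ha Hb.
have H2 := lp2_lcm Ha (lp_iter 1 Hb).
have [k [Ex Ey]] := G2 H1 H2.
have [a0 Ha'] := Ha; have [b0 _] := Hb.
have ak : (a %| k)%N by apply/Ha'.
have Hk := lp_iter_mod Hb (esym Ey).
rewrite /coprime.
case: (ltngtP b 1) => [b1|b1|->]; last by rewrite gcdn1.
  by move: b0; rewrite ltnNge -ltnS b1.
have g1 : (gcdn a b %| k)%N := dvdn_trans (dvdn_gcdl a b) ak.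
have g2 : (gcdn a b %| k %% b)%N.
  rewrite (divn_eq k b) in g1.
  by move: g1; rewrite dvdn_addr // dvdn_mull // dvdn_gcdr.
by move: g2; rewrite Hk modn_small // dvdn1.
Qed.

Lemma Ex n : (0 < n)%N -> exists a b, LS a /\ LT b /\ n = (a * b)%N.
Proof.
move=> n0; have [x [y H]] := G1 n0.
have [a [b [Ha [Hb ->]]]] := lp2_comp H.
exists a, b; split; first by exists x.
split; first by exists y.
have := muln_lcm_gcd a b; rewrite (eqP (U1 Ha Hb)) muln1 => ->; done.
Qed.

Lemma L1 : LS 1 /\ LT 1.
Proof.
have [a [b [Ha [Hb E]]]] := Ex (ltn0Sn 0).
move: (esym E) => /eqP; rewrite muln_eq1 => /andP [/eqP ea /eqP eb].
by rewrite ea in Ha; rewrite eb in Hb.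
Qed.

Lemma Lprime p : prime p -> LS p \/ LT p.
Proof.
move=> pp; have [a [b [Ha [Hb E]]]] := Ex (prime_gt0 pp).
have ap : (a %| p)%N by rewrite E dvdn_mulr.
case/primeP: (pp) => _ /(_ a ap) /orP [/eqP a1 | /eqP ap'].
- by right; rewrite E a1 mul1n.
- by left; rewrite -ap'.
Qed.

Lemma notboth p : prime p -> LS p -> LT p -> False.
Proof.
move=> pp [x Hx] [y Hy]; have := U1 Hx Hy.
rewrite /coprime gcdnn => /eqP p1; by rewrite p1 in pp.
Qed.

Lemma CA_S n p : LS n -> prime p -> (p %| n)%N -> LS p.
Proof.
move=> [x Hx] pp pn; case: (Lprime pp) => // -[y Hy].
have cop := U1 Hx Hy.
have : (p %| gcdn n p)%N by rewrite dvdn_gcd pn dvdnn.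
by rewrite (eqP cop) dvdn1 => /eqP p1; rewrite p1 in pp.
Qed.

Lemma CA_T n p : LT n -> prime p -> (p %| n)%N -> LT p.
Proof.
move=> [y Hy] pp pn; case: (Lprime pp) => // -[x Hx].
have cop := U1 Hx Hy.
have : (p %| gcdn p n)%N by rewrite dvdn_gcd pn dvdnn.
by rewrite (eqP cop) dvdn1 => /eqP p1; rewrite p1 in pp.
Qed.

Lemma CB_S n : (0 < n)%N -> (forall p, prime p -> (p %| n)%N -> LS p) -> LS n.
Proof.
move=> n0 H; have [a [b [Ha [Hb E]]]] := Ex n0.
case: (ltngtP b 1) => [b1|b1|b1].
- by move: n0; rewrite E; move: b1; rewrite ltnS leqn0 => /eqP ->; rewrite muln0.
- have qp := pdiv_prime b1.
  have qb := pdiv_dvd b.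
  exfalso; apply: (notboth qp); last exact: CA_T Hb qp qb.
  by apply: H => //; rewrite E dvdn_mull.
- by rewrite E b1 muln1.
Qed.

Lemma CB_T n : (0 < n)%N -> (forall p, prime p -> (p %| n)%N -> LT p) -> LT n.
Proof.
move=> n0 H; have [a [b [Ha [Hb E]]]] := Ex n0.
case: (ltngtP a 1) => [a1|a1|a1].
- by move: n0; rewrite E; move: a1; rewrite ltnS leqn0 => /eqP ->; rewrite mul0n.
- have qp := pdiv_prime a1.
  have qa := pdiv_dvd a.
  exfalso; apply: (notboth qp); first exact: CA_S Ha qp qa.
  by apply: H => //; rewrite E dvdn_mulr.
- by rewrite E a1 mul1n.
Qed.

Lemma single_S n x : lp S x n -> closed_orbits S n = [set orb S x n].
Proof.
move=> Hx; have [_ [y Hy]] := L1; have [n0 _] := Hx.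
apply/predeqP => A; split.
- move=> HA; have [x' [Hx' ->]] := co_lp n0 HA.
  have H1 := lp2_lcm Hx Hy; have H2 := lp2_lcm Hx' Hy.
  have [k [-> _]] := G2 H1 H2.
  by rewrite /= orb_iter.
- by move=> ->; apply: lp_co.
Qed.

Lemma single_T n y : lp T y n -> closed_orbits T n = [set orb T y n].
Proof.
move=> Hy; have [[x Hx] _] := L1; have [n0 _] := Hy.
apply/predeqP => A; split.
- move=> HA; have [y' [Hy' ->]] := co_lp n0 HA.
  have H1 := lp2_lcm Hx Hy; have H2 := lp2_lcm Hx Hy'.
  have [k [_ ->]] := G2 H1 H2.
  by rewrite /= orb_iter.
- by move=> ->; apply: lp_co.
Qed.

Lemma empty_S n : (0 < n)%N -> ~ LS n -> closed_orbits S n = set0.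
Proof.
move=> n0 nL; apply/predeqP => A; split => // HA.
by have [x [Hx _]] := co_lp n0 HA; apply: nL; exists x.
Qed.

Lemma empty_T n : (0 < n)%N -> ~ LT n -> closed_orbits T n = set0.
Proof.
move=> n0 nL; apply/predeqP => A; split => // HA.
by have [x [Hx _]] := co_lp n0 HA; apply: nL; exists x.
Qed.

End Main.

Theorem proposition3p1 (X Y : Type) (S : X -> X) (T : Y -> Y)
  (finS : forall n : nat, (0 < n)%N -> finite_set (per_points S n))
  (finT : forall n : nat, (0 < n)%N -> finite_set (per_points T n))
  (hST : forall n : nat, (0 < n)%N -> O (prod_map S T) n = 1%N) :
  exists P : set nat, (forall p, P p -> prime p) /\
    forall n : nat, (0 < n)%N ->
      O T n = s_ P n /\ O S n = s_ (primes_compl P) n.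
Proof.
have G1 : forall n, (0 < n)%N -> exists x y, lp2 S T x y n.
  move=> n n0; have [A HA] := O_one (hST n n0).
  have : closed_orbits (prod_map S T) n A by rewrite HA.
  move=> /(co_lp n0) [[x y] [H _]]; exists x, y; exact/lp_prod.
have G2 : forall n x y x' y', lp2 S T x y n -> lp2 S T x' y' n ->
    exists k, x' = iter k S x /\ y' = iter k T y.
  move=> n x y x' y' /lp_prod H /lp_prod H'.
  have n0 : (0 < n)%N by case: H.
  have [A HA] := O_one (hST n n0).
  have E1 := lp_co H; have E2 := lp_co H'.
  rewrite HA /= in E1; rewrite HA /= in E2.
  have : orb (prod_map S T) (x, y) n (x', y').
    by rewrite E1 -E2; exists 0%N.
  move=> [k _]; rewrite iter_prod => -[<- <-]; by exists k.
exists [set p | prime p /\ ~ LT T p]; split; first by move=> p [].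
move=> n n0; split.
- rewrite /s_; case: asboolP => [[p [[pp nLp] pn]] | nex].
  + apply: O_0; apply: empty_T => // Ln; apply: nLp.
    exact: (@CA_T X Y S T G1 G2 n p Ln pp pn).
  + have [y Hy] : LT T n.
      apply: (CB_T G1 G2 n0) => p pp pn.
      apply: contrapT => nL; apply: nex; exists p; split => //.
    exact: O_1 (single_T G1 G2 Hy).
- rewrite /s_; case: asboolP => [[p [[pp nP] pn]] | nex].
  + have Lp : LT T p by apply: contrapT => nL; apply: nP.
    apply: O_0; apply: empty_S => // Ln.
    exact: (notboth G2 pp (CA_S G1 G2 Ln pp pn) Lp).
  + have [x Hx] : LS S n.
      apply: (CB_S G1 G2 n0) => p pp pn.
      case: (Lprime G1 G2 pp) => // Lp; exfalso; apply: nex.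
      exists p; split => //; split => // -[_]; exact.
    exact: O_1 (single_S G1 G2 Hx).
Qed.
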